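(* Let $f\colon X\to X$ be a totally transitive homeomorphism of a metric space $X$ and let $\mu$ be a Borel probability measure on $X$ inner-distal with respect to $f$. If $X$ is $\mu$-Baire, then $\mu(\operatorname{Int}\operatorname{Per}(f))=0$.
   Context: $\mathcal{P}(x)=\{y\colon \inf_{n\in\mathbb{Z}} d(f^n(x),f^n(y))=0\}$; $\mu$ is inner-distal if $\mu(\operatorname{Int}\mathcal{P}(x))=0$ for all $x$. A set $F$ is $\mu$-nowhere-dense if $\mu(\operatorname{Int}\overline{F})=0$; $\mu$-meagre means a countable union of $\mu$-nowhere-dense sets; $X$ is $\mu$-Baire if $\mu(\operatorname{Int}A)=0$ for every $\mu$-meagre $A$. A homeomorphism is transitive if it has a dense orbit; $f$ is totally transitive if $f^n$ is transitive for every integer $n\ge1$. $\operatorname{Per}(f)=\{p\colon f^n(p)=p$ for some $n\ge1\}$. *)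

(* Defs.v *)
From HB Require Import structures.
From mathcomp Require Import all_boot all_order all_algebra.
From mathcomp Require Import all_classical all_reals all_analysis.
Set Implicit Arguments. Unset Strict Implicit. Unset Printing Implicit Defensive.
Import Order.TTheory GRing.Theory Num.Theory.
Local Open Scope classical_set_scope.
Local Open Scope ring_scope.

(* Metric spaces with a distinguished point (needed by the library's
   generated-sigma-algebra construction; harmless since a probability
   space is nonempty). *)
#[short(type="pmetricType")]
HB.structure Definition PointedMetric (K : numDomainType) :=
  { M of Metric K M & isPointed M }.

Notation borelT X := (g_sigma_algebraType (@open X)).

(* Integer iterates of a homeomorphism f with inverse g:
   f^n for n >= 0, g^(|n|) = f^n for n < 0. *)
Definition zit {X : Type} (f g : X -> X) (n : int) : X -> X :=
  match n with
  | Posz k => iter k f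
  | Negz k => iter k.+1 g
  end.

Definition homeo {X : topologicalType} (f g : X -> X) : Prop :=
  [/\ continuous f, continuous g, cancel f g & cancel g f].

Definition orbitZ {X : Type} (f g : X -> X) (x : X) : set X :=
  [set zit f g n x | n in [set: int]].

Definition transitive {X : topologicalType} (f g : X -> X) : Prop :=
  exists x, dense (orbitZ f g x).

Definition totally_transitive {X : topologicalType} (f g : X -> X) : Prop :=
  forall n : nat, (1 <= n)%N -> transitive (iter n f) (iter n g).

Definition Per {X : Type} (f : X -> X) : set X :=
  [set p | exists n : nat, (1 <= n)%N /\ iter n f p = p].

Definition proxcell {R : realType} {X : pmetricType R} (f g : X -> X) (x : X)
  : set X :=
  [set y | inf [set mdist (zit f g n x) (zit f g n y) | n in [set: int]] = 0].

Section mu_defs.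
Context {R : realType} {X : pmetricType R}.
Variable mu : set (borelT X) -> \bar R.

Definition inner_distal (f g : X -> X) : Prop :=
  forall x : X, mu (interior (proxcell f g x)) = 0%E.

Definition mu_nowhere_dense (F : set X) : Prop :=
  mu (interior (closure F)) = 0%E.

Definition mu_meagre (A : set X) : Prop :=
  exists F : nat -> set X,
    (forall n, mu_nowhere_dense (F n)) /\ A = \bigcup_n F n.

Definition mu_Baire : Prop :=
  forall A : set X, mu_meagre A -> mu (interior A) = 0%E.
End mu_defs.

(* Main.v *)
Require Import Defs.
From HB Require Import structures.
From mathcomp Require Import all_boot all_order all_algebra.
From mathcomp Require Import all_classical all_reals all_analysis.
Import Order.TTheory GRing.Theory Num.Theory.
Local Open Scope classical_set_scope.
Local Open Scope ring_scope.

Lemma iter_cont (X : topologicalType) (f : X -> X) n :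
  continuous f -> continuous (iter n f).
Proof.
move=> fc; elim: n => [|n IH] x /=; first exact: cvg_id.
exact: (continuous_comp (IH x) (fc (iter n f x))).
Qed.

Lemma iterK' (T : Type) (f g : T -> T) : cancel f g -> forall a, cancel (iter a f) (iter a g).
Proof.
move=> fK; elim=> [|a IH] z //.
by rewrite iterSr iterS fK IH.
Qed.

Lemma fix_closed (R : realType) (X : pmetricType R) (h : X -> X) :
  continuous h -> closure [set p | h p = p] `<=` [set p | h p = p].
Proof.
move=> hc p cp; apply: metric_hausdorff => A B HA HB.
have HA' : nbhs p (h @^-1` A) := hc p A HA.
have := cp (h @^-1` A `&` B) (filterI HA' HB).
move=> [q [fq [Aq Bq]]]; exists q; split => //.
by rewrite -fq.
Qed.

Theorem lemma3p8 (R : realType) (X : pmetricType R) (f g : X -> X)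
  (mu : probability (borelT X) R) :
  homeo f g ->
  totally_transitive f g ->
  inner_distal mu f g ->
  mu_Baire mu ->
  mu (interior (Per f)) = 0%E.
Proof.
move=> [fc gc fgK gfK] tt idl bai.
pose F := fun n => [set p : X | iter n.+1 f p = p].
have PerE : Per f = \bigcup_n F n.
  apply/seteqP; split => p.
    by move=> [[|n] [n1 Hn]] //; exists n.
  by move=> [n _ Hn]; exists n.+1.
case: (pselect (forall n, mu_nowhere_dense mu (F n))) => H.
  by rewrite PerE; apply: bai; exists F.
exfalso; move/existsNP: H => [n Hn].
rewrite /mu_nowhere_dense in Hn.
have clF : closure (F n) = F n.
  apply/seteqP; split; last exact: subset_closure.
  exact/fix_closed/iter_cont.
rewrite clF in Hn.
have [u Uu] : interior (F n) !=set0.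
  apply/set0P; apply/eqP => E; apply: Hn; rewrite E; exact: measure0.
pose h := iter n.+1 f; pose k := iter n.+1 g.
have hK : cancel h k by apply: iterK'.
have kK : cancel k h by apply: iterK'.
have [x dx] := tt n.+1 isT.
rewrite -/h -/k in dx.
have [y [Iy [m _ ymx]]] := dx (interior (F n)) (ex_intro _ u Uu) (@open_interior _ _).
have Fy : h y = y := interior_subset Iy.
have [hx kx] : h x = x /\ k x = x.
  case: m ymx => a /= ymx.
    have hx : h x = x.
      have c := @iterK' _ _ _ hK a; rewrite -(c (h x)) -[RHS](c x); congr (iter a k _).
      by rewrite -iterSr iterS ymx Fy.
    by split => //; rewrite -{1}hx hK.
  have ky : k y = y by rewrite -{1}Fy hK.
  have kx : k x = x.
    have c := @iterK' _ _ _ kK a.+1; rewrite -(c (k x)) -[RHS](c x); congr (iter a.+1 h _).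
    have ymx' : iter a.+1 k x = y := ymx.
    by rewrite -iterSr iterS ymx' ky.
  by split => //; rewrite -{1}kx kK.
have orb : forall j, zit h k j x = x.
  by case=> a /=; rewrite iter_fix.
have single : forall z : X, z = x.
  move=> z; apply/eqP/negPn/negP => nz.
  have [A [oA zA xA]] := hausdorff_accessible (@metric_hausdorff _ X) nz.
  have [w [Aw [j _ wj]]] := dx A (ex_intro _ z (set_mem zA)) oA.
  rewrite orb in wj; subst w.
  by move/set_mem: xA; apply.
have := idl x.
have -> : proxcell f g x = setT.
  apply/seteqP; split => // y0 _; rewrite /proxcell /=.
  have -> : [set mdist (zit f g j x) (zit f g j y0) | j in [set: int]] = [set 0].
    apply/seteqP; split.
      by move=> r [j _ <-]; rewrite (single (zit f g j x)) (single (zit f g j y0)) mdistxx.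
    move=> r ->; exists 0 => //.
    by rewrite (single (zit f g 0 x)) (single (zit f g 0 y0)) mdistxx.
  apply/le_anti/andP; split.
    have hl : has_lbound [set (0:R)] by exists 0 => z ->.
    exact: (ge_inf hl (erefl (0:R))).
  by apply: lb_le_inf; [exists 0 | move=> z ->].
rewrite interiorT probability_setT => /eqP.
by rewrite onee_eq0.
Qed.
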